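(* For every $f\in\mathbf{Stp}$, the sets $$U^\Pi_f=\{h\in\mathbb N^{\mathbb N}: h^{[1]}\in[\![h^{[2]}]\!]^\Pi_f\},\qquad U^\Sigma_f=\{h\in\mathbb N^{\mathbb N}: h^{[1]}\in[\![h^{[2]}]\!]^\Sigma_f\}$$ satisfy $U^\Pi_f\in\Pi(\Sigma_{\alpha[f]}\mathcal A)$ and $U^\Sigma_f\in\Sigma(\Pi_{\alpha[f]}\mathcal A)$.
   Context: $\mathbb N=\{1,2,\dots\}$. $B^m_n=\{f\in\mathbb N^{\mathbb N}: f(n)=m\}$. $\mathcal A$ is the family of finite unions of finite intersections of sets of the form $B^m_n$ or $\mathbb N^{\mathbb N}\setminus B^m_n$. $\Pi(\mathcal X)$ (resp. $\Sigma(\mathcal X)$) denotes the family of countable intersections (resp. unions) of members of $\mathcal X$. Transfinitely: $\Pi_0\mathcal A=\Sigma_0\mathcal A=\mathcal A$, $\Pi_{\alpha+1}\mathcal A=\Pi(\Sigma_\alpha\mathcal A)$, $\Sigma_{\alpha+1}\mathcal A=\Sigma(\Pi_\alpha\mathcal A)$, and at limits $\lambda$ the unions over $\alpha<\lambda$. Fix any bijection $\langle\cdot,\cdot\rangle:\mathbb N\times\mathbb N\to\mathbb N\setminus\{1\}$, and put $\langle\,\rangle=1$, $\langle a_1\cdots a_n\rangle=\langle a_1,\langle a_2\cdots a_n\rangle\rangle$ (a bijection from finite tuples onto $\mathbb N$). For $k\in\mathbb N$: $[\![k]\!]^{\mathcal S'}=\mathbb N^{\mathbb N}\setminus B^m_n$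 if $k=\langle1mn\rangle$, $=B^m_n$ if $k=\langle2mn\rangle$, $=\emptyset$ otherwise; for $k=\langle a_1\cdots a_K\rangle$, $[\![k]\!]^{\mathcal S'_\cap}=\bigcap_{i\le K}[\![a_i]\!]^{\mathcal S'}$ (empty intersection $\mathbb N^{\mathbb N}$) and $[\![k]\!]^{\mathcal A}=\bigcup_{i\le K}[\![a_i]\!]^{\mathcal S'_\cap}$ (empty union $\emptyset$). $f^{[n]}(m)=f(\langle n,m\rangle)$. Stumps $\mathbf{Stp}\subseteq\mathbb N^{\mathbb N}$: inductively, $f\in\mathbf{Stp}$ if $f(1)\ne1$, or if $f(1)=1$ and all $f^{[n]}\in\mathbf{Stp}$. Ordinal $\alpha[f]$: $0$ if $f(1)\neq1$, and $\sup_n(\alpha[f^{[n]}]+1)$ if $f(1)=1$. For $f\in\mathbf{Stp}$, $g\in\mathbb N^{\mathbb N}$: if $f(1)\ne1$, $[\![g]\!]^\Pi_f=\bigcap_{n\ge2}[\![g(n)]\!]^{\mathcal A}$, $[\![g]\!]^\Sigma_f=\bigcup_{n\ge2}[\![g(n)]\!]^{\mathcal A}$; if $f(1)=1$, $[\![g]\!]^\Pi_f=\bigcap_n[\![g^{[n]}]\!]^\Sigma_{f^{[n]}}$, $[\![g]\!]^\Sigma_f=\bigcup_n[\![g^{[n]}]\!]^\Pi_{f^{[n]}}$. *)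

(* Defs.v *)
(* N = {1,2,...} is modelled by Stdlib's [positive];
   Baire space N^N is [positive -> positive]. *)
From Stdlib Require Import PArith List.
Import ListNotations.
Open Scope positive_scope.

Definition Baire := positive -> positive.
Definition bset := Baire -> Prop.
Definition bclass := bset -> Prop.

Definition seteq (X Y : bset) : Prop := forall x, X x <-> Y x.

Definition PiC (C : bclass) : bclass := fun Y =>
  exists Z : nat -> bset, (forall k, C (Z k)) /\ seteq Y (fun x => forall k, Z k x).
Definition SigC (C : bclass) : bclass := fun Y =>
  exists Z : nat -> bset, (forall k, C (Z k)) /\ seteq Y (fun x => exists k, Z k x).

(* literal (b,m,n): b = true means B^m_n, b = false means its complement *)
Definition lit_sem (l : bool * positive * positive) (x : Baire) : Prop :=
  match l with
  | (true, m, n) => x n = m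
  | (false, m, n) => x n <> m
  end.

Definition AClass : bclass := fun Y =>
  exists L : list (list (bool * positive * positive)),
    seteq Y (fun x => Exists (fun c => Forall (fun l => lit_sem l x) c) L).

(* countable ordinals as Brouwer trees; a limit node is the sup of its sequence *)
Inductive ord : Type :=
| OZ : ord
| OS : ord -> ord
| OL : (positive -> ord) -> ord.

Fixpoint hier (a : ord) : bclass * bclass :=
  match a with
  | OZ => (AClass, AClass)
  | OS b => (PiC (snd (hier b)), SigC (fst (hier b)))
  | OL s => ((fun Y => exists n, fst (hier (s n)) Y),
             (fun Y => exists n, snd (hier (s n)) Y))
  end.
Definition PiH (a : ord) : bclass := fst (hier a).
Definition SigH (a : ord) : bclass := snd (hier a).

Definition is_pairing (p : positive -> positive -> positive) : Prop :=
  (forall a b, p a b <> 1) /\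
  (forall a b c d, p a b = p c d -> a = c /\ b = d) /\
  (forall k, k <> 1 -> exists a b, p a b = k).

Section Coding.
Variable p : positive -> positive -> positive.

Fixpoint code (l : list positive) : positive :=
  match l with
  | [] => 1
  | a :: s => p a (code s)
  end.

Definition semSp (k : positive) : bset := fun x =>
  (exists m n, k = code [1; m; n] /\ x n <> m) \/
  (exists m n, k = code [2; m; n] /\ x n = m).

Definition semSi (k : positive) : bset := fun x =>
  exists l, code l = k /\ Forall (fun a => semSp a x) l.

Definition semA (k : positive) : bset := fun x =>
  exists l, code l = k /\ Exists (fun a => semSi a x) l.

Definition sub (f : Baire) (n : positive) : Baire := fun m => f (p n m).

Inductive Stp : Baire -> Prop :=
| Stp_leaf f : f 1 <> 1 -> Stp f
| Stp_node f : f 1 = 1 -> (forall n, Stp (sub f n)) -> Stp f.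

Inductive alpha_rel : Baire -> ord -> Prop :=
| alpha_leaf f : f 1 <> 1 -> alpha_rel f OZ
| alpha_node f (o : positive -> ord) :
    f 1 = 1 -> (forall n, alpha_rel (sub f n) (o n)) ->
    alpha_rel f (OL (fun n => OS (o n))).

(* piSem f g x : x \in [[g]]^Pi_f ;  sigSem f g x : x \in [[g]]^Sigma_f *)
Inductive piSem : Baire -> Baire -> Baire -> Prop :=
| pi_leaf f g x : f 1 <> 1 -> (forall n, n <> 1 -> semA (g n) x) -> piSem f g x
| pi_node f g x : f 1 = 1 -> (forall n, sigSem (sub f n) (sub g n) x) -> piSem f g x
with sigSem : Baire -> Baire -> Baire -> Prop :=
| sig_leaf f g x n : f 1 <> 1 -> n <> 1 -> semA (g n) x -> sigSem f g x
| sig_node f g x n : f 1 = 1 -> piSem (sub f n) (sub g n) x -> sigSem f g x.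

Definition UPi (f : Baire) : bset := fun h => piSem f (sub h 2) (sub h 1).
Definition USig (f : Baire) : bset := fun h => sigSem f (sub h 2) (sub h 1).
End Coding.

(* Main.v *)
Require Import Defs.
From Stdlib Require Import PArith List Cantor Classical ClassicalEpsilon FunctionalExtensionality.
Import ListNotations.

Definition ix (k : nat) : positive * positive :=
  (Pos.of_nat (fst (Cantor.of_nat k)), Pos.of_nat (snd (Cantor.of_nat k))).

Lemma ix_surj a b : exists k, ix k = (a, b).
Proof.
  exists (Cantor.to_nat (Pos.to_nat a, Pos.to_nat b)).
  unfold ix. rewrite Cantor.cancel_of_to. simpl. rewrite !Pos2Nat.id. reflexivity.
Qed.

Lemma PiC_pair (C : bclass) (Y : bset) (Z : positive -> positive -> bset) :
  (forall a b, C (Z a b)) -> seteq Y (fun x => forall a b, Z a b x) -> PiC C Y.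
Proof.
  intros HC HY. exists (fun k => Z (fst (ix k)) (snd (ix k))). split.
  - intros k; apply HC.
  - intros x. rewrite (HY x). split.
    + intros H k. apply H.
    + intros H a b. destruct (ix_surj a b) as [k Hk]. specialize (H k).
      rewrite Hk in H. exact H.
Qed.

Lemma SigC_pair (C : bclass) (Y : bset) (Z : positive -> positive -> bset) :
  (forall a b, C (Z a b)) -> seteq Y (fun x => exists a b, Z a b x) -> SigC C Y.
Proof.
  intros HC HY. exists (fun k => Z (fst (ix k)) (snd (ix k))). split.
  - intros k; apply HC.
  - intros x. rewrite (HY x). split.
    + intros [a [b H]]. destruct (ix_surj a b) as [k Hk]. exists k.
      rewrite Hk. exact H.
    + intros [k H]. eauto.
Qed.

Lemma PiC_pos (C : bclass) (Y : bset) (Z : positive -> bset) :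
  (forall a, C (Z a)) -> seteq Y (fun x => forall a, Z a x) -> PiC C Y.
Proof.
  intros HC HY. apply (PiC_pair C Y (fun a _ => Z a)); auto.
  intros x. rewrite (HY x). split; intros H; intros; [apply H | apply (H a 1%positive)].
Qed.

Lemma SigC_pos (C : bclass) (Y : bset) (Z : positive -> bset) :
  (forall a, C (Z a)) -> seteq Y (fun x => exists a, Z a x) -> SigC C Y.
Proof.
  intros HC HY. apply (SigC_pair C Y (fun a _ => Z a)); auto.
  intros x. rewrite (HY x). split.
  - intros [a H]. exists a, 1%positive. exact H.
  - intros [a [_ H]]. eauto.
Qed.

Lemma A_ext Y Y' : seteq Y Y' -> AClass Y -> AClass Y'.
Proof.
  intros E [L HL]. exists L. intros x. rewrite <- (E x). apply HL.
Qed.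

Lemma A_empty : AClass (fun _ => False).
Proof. exists []. intros x. split; [tauto| intros H; inversion H]. Qed.

Lemma A_full : AClass (fun _ => True).
Proof. exists [[]]. intros x. split; auto. Qed.

Lemma A_lit l : AClass (lit_sem l).
Proof.
  exists [[l]]. intros x. split.
  - intros H. constructor. constructor; auto.
  - intros H. inversion H; subst.
    + inversion H1; auto.
    + inversion H1.
Qed.

Lemma A_union Y1 Y2 : AClass Y1 -> AClass Y2 -> AClass (fun x => Y1 x \/ Y2 x).
Proof.
  intros [L1 H1] [L2 H2]. exists (L1 ++ L2). intros x.
  rewrite Exists_app, (H1 x), (H2 x). tauto.
Qed.

Lemma Exists_map_iff {A B} (P : B -> Prop) (f : A -> B) l :
  Exists P (map f l) <-> Exists (fun a => P (f a)) l.
Proof.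
  induction l; simpl; split; intros H; inversion H; subst; auto.
  - apply Exists_cons_tl. apply IHl; auto.
  - apply Exists_cons_tl. apply IHl; auto.
Qed.

Lemma Forall_map_iff {A B} (P : B -> Prop) (f : A -> B) l :
  Forall P (map f l) <-> Forall (fun a => P (f a)) l.
Proof.
  induction l; simpl; split; intros H; inversion H; subst; constructor; auto;
  apply IHl; auto.
Qed.

Lemma A_lit_and l Y : AClass Y -> AClass (fun x => lit_sem l x /\ Y x).
Proof.
  intros [L HL]. exists (map (cons l) L). intros x.
  rewrite Exists_map_iff, (HL x). split.
  - intros [Hl H]. eapply Exists_impl; [|exact H]. intros c Hc. constructor; auto.
  - intros H. split.
    + apply Exists_exists in H. destruct H as [c [_ Hc]]. inversion Hc; auto.
    + eapply Exists_impl; [|exact H]. intros c Hc. inversion Hc; auto.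
Qed.

Definition substl (pi : positive -> positive) (l : bool * positive * positive) :=
  match l with (b, m, n) => (b, m, pi n) end.

Lemma A_subst (pi : positive -> positive) Y :
  AClass Y -> AClass (fun h => Y (fun j => h (pi j))).
Proof.
  intros [L HL]. exists (map (map (substl pi)) L). intros h.
  rewrite (HL (fun j => h (pi j))), Exists_map_iff. split; intros H; eapply Exists_impl; try exact H;
  intros c Hc; simpl in *; [apply Forall_map_iff | apply Forall_map_iff in Hc];
  eapply Forall_impl; try exact Hc; intros [[b m] n]; simpl; auto.
Qed.

Lemma PiC_subst (C : bclass) pi Y :
  (forall Y, C Y -> C (fun h => Y (fun j => h (pi j)))) ->
  PiC C Y -> PiC C (fun h => Y (fun j => h (pi j))).
Proof.
  intros HC [Z [HZ HY]]. exists (fun k h => Z k (fun j => h (pi j))). split.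
  - intros k. apply HC, HZ.
  - intros h. apply HY.
Qed.

Lemma SigC_subst (C : bclass) pi Y :
  (forall Y, C Y -> C (fun h => Y (fun j => h (pi j)))) ->
  SigC C Y -> SigC C (fun h => Y (fun j => h (pi j))).
Proof.
  intros HC [Z [HZ HY]]. exists (fun k h => Z k (fun j => h (pi j))). split.
  - intros k. apply HC, HZ.
  - intros h. apply HY.
Qed.

Lemma hier_subst (o : ord) pi :
  (forall Y, PiH o Y -> PiH o (fun h => Y (fun j => h (pi j)))) /\
  (forall Y, SigH o Y -> SigH o (fun h => Y (fun j => h (pi j)))).
Proof.
  induction o as [|b IH|s IH]; unfold PiH, SigH in *; simpl.
  - split; intros Y; apply A_subst.
  - destruct IH as [IH1 IH2]. split; intros Y.
    + apply PiC_subst; auto.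
    + apply SigC_subst; auto.
  - split; intros Y [n Hn]; exists n; apply IH; auto.
Qed.

Section Main.
Variable p : positive -> positive -> positive.
Hypothesis Hp : is_pairing p.

Lemma p_neq1 a b : p a b <> 1%positive.
Proof. apply (proj1 Hp). Qed.
Lemma p_inj a b c d : p a b = p c d -> a = c /\ b = d.
Proof. apply (proj1 (proj2 Hp)). Qed.

Lemma code_inj l1 l2 : code p l1 = code p l2 -> l1 = l2.
Proof.
  revert l2; induction l1 as [|a s IH]; intros [|c t]; simpl; intros H; auto.
  - exfalso; apply (p_neq1 c (code p t)); auto.
  - exfalso; apply (p_neq1 a (code p s)); auto.
  - apply p_inj in H. destruct H as [-> H]. f_equal. auto.
Qed.

Lemma semSp_cases b :
  (exists l, seteq (semSp p b) (lit_sem l)) \/ seteq (semSp p b) (fun _ => False).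
Proof.
  destruct (classic (exists m n, b = code p [1; m; n]%positive)) as [[m [n E]]|N1].
  - left. exists (false, m, n). intros x. unfold semSp, lit_sem. split.
    + intros [[m' [n' [E' H]]]|[m' [n' [E' H]]]].
      * rewrite E in E'. apply code_inj in E'. injection E'; intros; subst; auto.
      * rewrite E in E'. apply code_inj in E'. discriminate.
    + intros H. left. eauto.
  - destruct (classic (exists m n, b = code p [2; m; n]%positive)) as [[m [n E]]|N2].
    + left. exists (true, m, n). intros x. unfold semSp, lit_sem. split.
      * intros [[m' [n' [E' H]]]|[m' [n' [E' H]]]].
        -- exfalso; eauto.
        -- rewrite E in E'. apply code_inj in E'. injection E'; intros; subst; auto.
      * intros H. right. eauto.
    + right. intros x. unfold semSp. split; [|tauto].
      intros [[m' [n' [E' H]]]|[m' [n' [E' H]]]]; eauto.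
Qed.

Lemma A_Forall_semSp l : AClass (fun x => Forall (fun a => semSp p a x) l).
Proof.
  induction l as [|b l IH].
  - eapply A_ext; [|apply A_full]. intros x; split; auto.
  - destruct (semSp_cases b) as [[lt E]|E].
    + eapply A_ext; [|apply (A_lit_and lt _ IH)]. intros x. rewrite <- (E x).
      split; [intros [H1 H2]; constructor; auto | intros H; inversion H; auto].
    + eapply A_ext; [|apply A_empty]. intros x. split; [tauto|].
      intros H; inversion H; subst. apply (E x); auto.
Qed.

Lemma A_semSi a : AClass (semSi p a).
Proof.
  destruct (classic (exists l, code p l = a)) as [[l E]|N].
  - eapply A_ext; [|apply (A_Forall_semSp l)]. intros x. unfold semSi. split.
    + intros H. eauto.
    + intros [l' [E' H]]. rewrite <- E' in E. apply code_inj in E. subst; auto.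
  - eapply A_ext; [|apply A_empty]. intros x. unfold semSi. split; [tauto|].
    intros [l' [E' _]]; eauto.
Qed.

Lemma A_Exists_semSi l : AClass (fun x => Exists (fun a => semSi p a x) l).
Proof.
  induction l as [|b l IH].
  - eapply A_ext; [|apply A_empty]. intros x; split; [tauto|intros H; inversion H].
  - eapply A_ext; [|apply (A_union _ _ (A_semSi b) IH)]. intros x.
    split; [intros [H|H]; auto | intros H; inversion H; auto].
Qed.

Lemma A_semA k : AClass (semA p k).
Proof.
  destruct (classic (exists l, code p l = k)) as [[l E]|N].
  - eapply A_ext; [|apply (A_Exists_semSi l)]. intros x. unfold semA. split.
    + intros H. eauto.
    + intros [l' [E' H]]. rewrite <- E' in E. apply code_inj in E. subst; auto.
  - eapply A_ext; [|apply A_empty]. intros x. unfold semA. split; [tauto|].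
    intros [l' [E' _]]; eauto.
Qed.

Lemma A_semA_h k : AClass (fun h => semA p k (sub p h 1)).
Proof. apply (A_subst (p 1%positive) (semA p k)), A_semA. Qed.

Definition pin (n : positive) (j : positive) : positive :=
  match excluded_middle_informative (exists b, j = p 2 b) with
  | left H => p 2 (p n (proj1_sig (constructive_indefinite_description _ H)))
  | right _ => j
  end.

Lemma pin_1 n m : pin n (p 1 m) = p 1 m.
Proof.
  unfold pin. destruct excluded_middle_informative as [H|_]; auto.
  exfalso. destruct H as [b H]. apply p_inj in H. destruct H; discriminate.
Qed.

Lemma pin_2 n m : pin n (p 2 m) = p 2 (p n m).
Proof.
  unfold pin. destruct excluded_middle_informative as [H|N].
  - destruct constructive_indefinite_description as [b Hb]. simpl.
    apply p_inj in Hb. destruct Hb as [_ ->]. auto.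
  - exfalso; eauto.
Qed.

Lemma sub_pin1 n h : sub p (fun j => h (pin n j)) 1 = sub p h 1.
Proof. apply functional_extensionality; intros m. unfold sub. rewrite pin_1. auto. Qed.

Lemma sub_pin2 n h : sub p (fun j => h (pin n j)) 2 = sub p (sub p h 2) n.
Proof. apply functional_extensionality; intros m. unfold sub. rewrite pin_2. auto. Qed.

Lemma pi_leaf_iff f g x : f 1%positive <> 1%positive ->
  (piSem p f g x <-> forall n, n <> 1%positive -> semA p (g n) x).
Proof.
  intros Hf. split.
  - intros H; inversion H; subst; auto; contradiction.
  - intros H; apply pi_leaf; auto.
Qed.

Lemma sig_leaf_iff f g x : f 1%positive <> 1%positive ->
  (sigSem p f g x <-> exists n, n <> 1%positive /\ semA p (g n) x).
Proof.
  intros Hf. split.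
  - intros H; inversion H; subst; eauto; contradiction.
  - intros [n [H1 H2]]; eapply sig_leaf; eauto.
Qed.

Lemma pi_node_iff f g x : f 1%positive = 1%positive ->
  (piSem p f g x <-> forall n, sigSem p (sub p f n) (sub p g n) x).
Proof.
  intros Hf. split.
  - intros H; inversion H; subst; auto; contradiction.
  - intros H; apply pi_node; auto.
Qed.

Lemma sig_node_iff f g x : f 1%positive = 1%positive ->
  (sigSem p f g x <-> exists n, piSem p (sub p f n) (sub p g n) x).
Proof.
  intros Hf. split.
  - intros H; inversion H; subst; eauto; contradiction.
  - intros [n H]; eapply sig_node; eauto.
Qed.

Lemma main f o : alpha_rel p f o ->
  PiC (SigH o) (UPi p f) /\ SigC (PiH o) (USig p f).
Proof.
  induction 1 as [f Hf | f o Hf Ho IH].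
  - split.
    + apply (PiC_pair _ _ (fun N K h => N = 1%positive \/ h (p 2 N) <> K \/ semA p K (sub p h 1))).
      * intros N K. destruct (Pos.eq_dec N 1) as [E|E].
        -- eapply A_ext; [|apply A_full]. intros h; split; auto.
        -- eapply A_ext; [|apply (A_union _ _ (A_lit (false, K, p 2 N)) (A_semA_h K))].
           intros h. simpl. tauto.
      * intros h. unfold UPi. rewrite (pi_leaf_iff _ _ _ Hf). unfold sub at 1. split.
        -- intros H N K. destruct (Pos.eq_dec N 1) as [E|E]; auto.
           right. destruct (Pos.eq_dec (h (p 2 N)) K) as [E2|E2]; auto.
           right. rewrite <- E2. apply H; auto.
        -- intros H N HN. destruct (H N (h (p 2 N))) as [E|[E|E]]; tauto.
    + apply (SigC_pair _ _ (fun N K h => N <> 1%positive /\ h (p 2 N) = K /\ semA p K (sub p h 1))).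
      * intros N K. destruct (Pos.eq_dec N 1) as [E|E].
        -- eapply A_ext; [|apply A_empty]. intros h; split; tauto.
        -- eapply A_ext; [|apply (A_lit_and (true, K, p 2 N) _ (A_semA_h K))].
           intros h. simpl. tauto.
      * intros h. unfold USig. rewrite (sig_leaf_iff _ _ _ Hf). unfold sub at 1. split.
        -- intros [N [HN H]]. exists N, (h (p 2 N)). auto.
        -- intros [N [K [HN [E H]]]]. exists N. subst; auto.
  - split.
    + apply (PiC_pos _ _ (fun n h => USig p (sub p f n) (fun j => h (pin n j)))).
      * intros n. exists n. destruct (IH n) as [_ H].
        apply (proj2 (hier_subst (OS (o n)) (pin n))). exact H.
      * intros h. unfold UPi. rewrite (pi_node_iff _ _ _ Hf). unfold USig.
        split; intros H n; specialize (H n); rewrite sub_pin1, sub_pin2 in *; auto.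
    + apply (SigC_pos _ _ (fun n h => UPi p (sub p f n) (fun j => h (pin n j)))).
      * intros n. exists n. destruct (IH n) as [H _].
        apply (proj1 (hier_subst (OS (o n)) (pin n))). exact H.
      * intros h. unfold USig. rewrite (sig_node_iff _ _ _ Hf). unfold UPi.
        split; intros [n H]; exists n; rewrite sub_pin1, sub_pin2 in *; auto.
Qed.

End Main.

Theorem lemma5p24 (p : positive -> positive -> positive) (Hp : is_pairing p)
  (f : Baire) (Hf : Stp p f) (o : ord) (Ho : alpha_rel p f o) :
  PiC (SigH o) (UPi p f) /\ SigC (PiH o) (USig p f).
Proof. apply main; auto. Qed.
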